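(* Let $X$, $Y$ be disjoint sets of cardinality at least two, $M\le\mathrm{Sym}(X)$ and $N\le\mathrm{Sym}(Y)$ nontrivial permutation groups, $T$ the $(|X|,|Y|)$-biregular tree and $c$ a legal colouring of $X$ and $Y$. For each vertex $v$ write $c(\overline{A}(v))$ for the unique colour of the arcs terminating at $v$. Then two vertices $v,v'\in V_X$ lie in the same orbit of $U_c(M,N)$ if and only if $c(\overline{A}(v))$ and $c(\overline{A}(v'))$ lie in the same orbit of $N$; and two vertices $v,v'\in V_Y$ lie in the same orbit of $U_c(M,N)$ if and only if $c(\overline{A}(v))$ and $c(\overline{A}(v'))$ lie in the same orbit of $M$.
   Context: $T$ has natural bipartition $VT=V_X\sqcup V_Y$ (vertices in $V_X$ have valency $|X|$, in $V_Y$ valency $|Y|$). $A(v)$, $\overline{A}(v)$ are the sets of arcs (ordered pairs of adjacent vertices) with origin, resp. terminus, $v$. A legal colouring is a map $c:AT\to X\cup Y$ restricting to a bijection $A(v)\to X$ for $v\in V_X$, to a bijection $A(v)\to Y$ for $v\in V_Y$, and constant on each $\overline{A}(v)$. $U_c(M,N)$ is the group of $g\in\mathrm{Aut}(T)$ with $gV_X=V_X$ and $c|_{A(gv)}\circ g|_{A(v)}\circ(c|_{A(v)})^{-1}$ in $M$ for $v\in V_X$ and in $N$ for $v\in V_Y$. *)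

(* Defs.v *)
(* X, Y are arbitrary (possibly infinite) types; the tree is any
   graph (V, adj) satisfying the defining properties of the (|X|,|Y|)-biregular
   tree (it is unique up to isomorphism). *)
From Stdlib Require Import List Relations.

Set Implicit Arguments.

Definition bijective {A B : Type} (f : A -> B) : Prop :=
  (forall a b, f a = f b -> a = b) /\ (forall y, exists x, f x = y).

Record perm_group {X : Type} (M : (X -> X) -> Prop) : Prop := {
  pg_bij  : forall m, M m -> bijective m;
  pg_id   : M (fun x => x);
  pg_comp : forall m n, M m -> M n -> M (fun x => m (n x));
  pg_inv  : forall m m', M m -> (forall x, m (m' x) = x /\ m' (m x) = x) -> M m'
}.

Definition nontrivial {X : Type} (M : (X -> X) -> Prop) : Prop :=
  exists m, M m /\ exists x, m x <> x.

Definition at_least_two (X : Type) : Prop := exists x1 x2 : X, x1 <> x2.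

Section Graph.
Variable V : Type.
Variable adj : V -> V -> Prop.

(* non-backtracking walk: [prev; x] followed by l *)
Fixpoint nbwalk (prev x : V) (l : list V) : Prop :=
  match l with
  | nil => True
  | y :: l' => adj x y /\ y <> prev /\ nbwalk x y l'
  end.

Definition is_tree : Prop :=
  (forall u v, adj u v -> adj v u) /\
  (forall v, ~ adj v v) /\
  (forall u v, clos_refl_trans V adj u v) /\
  (forall x y l, adj x y -> nbwalk x y l -> last l y <> x).

(* T with natural bipartition V_X = {isX = true}, V_Y = {isX = false},
   vertices of V_X of valency |X|, of V_Y of valency |Y|. *)
Definition biregular_tree (isX : V -> bool) (X Y : Type) : Prop :=
  is_tree /\
  (forall u v, adj u v -> isX u <> isX v) /\
  (forall v, isX v = true -> exists f : {w | adj v w} -> X, bijective f) /\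
  (forall v, isX v = false -> exists f : {w | adj v w} -> Y, bijective f).

(* legal colouring c : AT -> X ⊔ Y (values on non-arcs are irrelevant) *)
Definition legal_colouring (isX : V -> bool) (X Y : Type) (c : V -> V -> X + Y) : Prop :=
  (forall v, isX v = true ->
     (forall w, adj v w -> exists x, c v w = inl x) /\
     (forall w w', adj v w -> adj v w' -> c v w = c v w' -> w = w') /\
     (forall x, exists w, adj v w /\ c v w = inl x)) /\
  (forall v, isX v = false ->
     (forall w, adj v w -> exists y, c v w = inr y) /\
     (forall w w', adj v w -> adj v w' -> c v w = c v w' -> w = w') /\
     (forall y, exists w, adj v w /\ c v w = inr y)) /\
  (forall v u u', adj u v -> adj u' v -> c u v = c u' v).

Definition is_aut (g : V -> V) : Prop :=
  bijective g /\ (forall u v, adj u v <-> adj (g u) (g v)).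

Definition in_U (isX : V -> bool) (X Y : Type) (c : V -> V -> X + Y)
  (M : (X -> X) -> Prop) (N : (Y -> Y) -> Prop) (g : V -> V) : Prop :=
  is_aut g /\
  (forall v, isX (g v) = isX v) /\
  (forall v, isX v = true ->
     exists m, M m /\
       forall w x, adj v w -> c v w = inl x -> c (g v) (g w) = inl (m x)) /\
  (forall v, isX v = false ->
     exists n, N n /\
       forall w y, adj v w -> c v w = inr y -> c (g v) (g w) = inr (n y)).

Definition in_colour (X Y : Type) (c : V -> V -> X + Y) (v : V) (k : X + Y) : Prop :=
  forall u, adj u v -> c u v = k.

End Graph.

(* Main.v *)
Require Import Defs.
From Stdlib Require Import List Relations ClassicalEpsilon Classical Arith Lia.
Import ListNotations.
Set Implicit Arguments.
Section TreeFacts.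
Variable V : Type.
Variable adj : V -> V -> Prop.
Hypothesis adj_sym : forall u v, adj u v -> adj v u.
Hypothesis adj_irr : forall v, ~ adj v v.
Hypothesis tree_ax : forall x y l, adj x y -> nbwalk adj x y l -> last l y <> x.

Inductive NB : list V -> Prop :=
| nb0 : forall a, NB [a]
| nb1 : forall a b, adj a b -> NB [a; b]
| nbS : forall a b c l, adj a b -> a <> c -> NB (b :: c :: l) -> NB (a :: b :: c :: l).

Lemma NB_inv : forall x y m, NB (x :: y :: m) ->
  adj x y /\ NB (y :: m) /\ (forall z m', m = z :: m' -> x <> z).
Proof.
  intros x y m H; inversion H; subst.
  - split; [assumption|split; [constructor|intros z m' E; discriminate]].
  - split; [assumption|split; [assumption|intros z m' E; injection E; intros; subst; assumption]].
Qed.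

Lemma NB_cons2 : forall x y m, adj x y -> NB (y :: m) ->
  (forall z m', m = z :: m' -> x <> z) -> NB (x :: y :: m).
Proof.
  intros x y m A H C; destruct m as [|z m'].
  - constructor; assumption.
  - constructor; auto. apply (C z m'); reflexivity.
Qed.

Lemma NB_nil : ~ NB [].
Proof. intro H; inversion H. Qed.

Lemma NB_join : forall l1 a b c l2, NB (l1 ++ [a; b]) -> NB (b :: c :: l2) -> a <> c ->
  NB (l1 ++ a :: b :: c :: l2).
Proof.
  induction l1 as [|x l1 IH]; intros a b c l2 H1 H2 D; simpl in *.
  - destruct (NB_inv H1) as [A _]. constructor; assumption.
  - destruct l1 as [|y l1'].
    + simpl in *. destruct (NB_inv H1) as [A [H3 C]].
      apply NB_cons2; [exact A | apply (IH a b c l2); auto | ].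
      intros z m' E; injection E; intros; subst. eapply C; reflexivity.
    + simpl in *. destruct (NB_inv H1) as [A [H3 C]].
      apply NB_cons2; [exact A | apply (IH a b c l2 H3 H2 D) | ].
      intros z m' E. destruct l1' as [|w l1'']; simpl in *; injection E; intros; subst.
        -- eapply C; reflexivity.
        -- eapply C; reflexivity.
Qed.

Lemma NB_rev : forall l, NB l -> NB (rev l).
Proof.
  intros l H; induction H; simpl.
  - constructor.
  - constructor; auto.
  - simpl in IHNB. rewrite <- !app_assoc in *. simpl in *.
    apply NB_join; auto. constructor; auto.
Qed.

Lemma last_default : forall (a : V) l d d', last (a :: l) d = last (a :: l) d'.
Proof. intros a l; revert a; induction l as [|b l IH]; intros a d d'; [reflexivity|]. change (last (b :: l) d = last (b :: l) d'). apply IH. Qed.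

Lemma last_cons : forall (a : V) l d, last (a :: l) d = last l a.
Proof. intros a l d; destruct l; simpl; auto. apply last_default. Qed.

Lemma NB_nbwalk : forall l p x, NB (p :: x :: l) -> nbwalk adj p x l.
Proof.
  induction l as [|z l IH]; intros p x H; simpl; auto.
  destruct (NB_inv H) as [A [H2 C]]. destruct (NB_inv H2) as [A2 _].
  split; auto. split; auto.
  intro E; subst; apply (C p l); reflexivity.
Qed.

Lemma closed_false : forall l d, NB l -> 2 <= length l -> hd d l = last l d -> False.
Proof.
  intros l d H L E. destruct l as [|x [|y l]]; simpl in L; try (inversion L; inversion H1; fail).
  change (x = last (x :: y :: l) d) in E. rewrite last_cons, last_cons in E.
  destruct (NB_inv H) as [A _].
  apply (@tree_ax x y l A (NB_nbwalk H)). symmetry; assumption.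
Qed.

Lemma hd_rev : forall l (d : V), hd d (rev l) = last l d.
Proof.
  intros l d; induction l as [|a l IH] using rev_ind; simpl; auto.
  rewrite rev_app_distr; simpl. rewrite last_last. reflexivity.
Qed.

Lemma last_app_ne : forall (l m : list V) d, m <> [] -> last (l ++ m) d = last m d.
Proof.
  induction l as [|a l IH]; intros m d Hm; [reflexivity|].
  rewrite <- app_comm_cons, last_cons, IH by auto.
  destruct m; [congruence|]. apply last_default.
Qed.

Lemma NB_unique : forall P Q d, NB P -> NB Q -> hd d P = hd d Q -> last P d = last Q d -> P = Q.
Proof.
  induction P as [|w P IH]; intros Q d HP HQ H1 H2.
  - exfalso; apply (NB_nil HP).
  - destruct Q as [|w' Q]; [exfalso; apply (NB_nil HQ)|]. simpl in H1; subst w'.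
    destruct P as [|p1 P'], Q as [|q1 Q'].
    + reflexivity.
    + exfalso. apply (closed_false d HQ); simpl; auto with arith.
    + exfalso. apply (closed_false d HP); simpl; auto with arith.
    + destruct (classic (p1 = q1)) as [E|E].
      * subst q1. f_equal. apply (IH _ d); auto.
        -- apply (NB_inv HP).
        -- apply (NB_inv HQ).
      * exfalso.
        assert (HR := NB_rev HQ). simpl in HR. rewrite <- app_assoc in HR. simpl in HR.
        assert (HJ := NB_join _ HR HP (not_eq_sym E)).
        apply (closed_false d HJ).
        -- rewrite length_app; simpl. lia.
        -- replace (rev Q' ++ q1 :: w :: p1 :: P') with ((rev (q1 :: Q')) ++ w :: p1 :: P')
             by (simpl; rewrite <- !app_assoc; reflexivity).
           rewrite last_app_ne by discriminate.
           change (last (w :: p1 :: P') d) with (last (p1 :: P') d).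
           change (last (w :: p1 :: P') d) with (last (p1 :: P') d) in H2.
           change (last (w :: q1 :: Q') d) with (last (q1 :: Q') d) in H2.
           rewrite H2, <- hd_rev.
           destruct (rev (q1 :: Q')) eqn:ER; [|reflexivity].
           simpl in ER. destruct (rev Q'); discriminate.
Qed.

End TreeFacts.
Lemma last_map' : forall (A B : Type) (f : A -> B) l d, last (map f l) (f d) = f (last l d).
Proof.
  intros A B f l; induction l as [|a l IH]; intros d; [reflexivity|].
  destruct l as [|b l]; [reflexivity|].
  change (last (map f (b :: l)) (f d) = f (last (b :: l) d)). apply IH.
Qed.

Section Construction.
Variables (X Y V : Type) (adj : V -> V -> Prop) (isX : V -> bool) (c : V -> V -> X + Y).
Variables (mX : X -> X) (nY : Y -> Y).
Hypothesis HT : biregular_tree adj isX X Y.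
Hypothesis HL : legal_colouring adj isX c.
Hypothesis HmX : bijective mX.
Hypothesis HnY : bijective nY.
Variables v v' : V.

Definition tau (k : X + Y) : X + Y :=
  match k with inl x => inl (mX x) | inr y => inr (nY y) end.

Definition Rel (u u' : V) : Prop :=
  isX u = isX u' /\ forall z z', adj z u -> adj z' u' -> c z' u' = tau (c z u).

Hypothesis Hvv : Rel v v'.

Lemma asym : forall u w, adj u w -> adj w u.
Proof. destruct HT as [[H _] _]; exact H. Qed.
Lemma atree : forall x y l, adj x y -> nbwalk adj x y l -> last l y <> x.
Proof. destruct HT as [[_ [_ [_ H]]] _]; exact H. Qed.
Lemma aconn : forall u w, clos_refl_trans V adj u w.
Proof. destruct HT as [[_ [_ [H _]]] _]; exact H. Qed.
Lemma abip : forall u w, adj u w -> isX u <> isX w.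
Proof. destruct HT as [_ [H _]]; exact H. Qed.

Lemma col_unique : forall a b b', adj a b -> adj a b' -> c a b = c a b' -> b = b'.
Proof.
  destruct HL as [HX [HY _]]. intros a b b' H1 H2 E.
  destruct (isX a) eqn:Ea.
  - exact (proj1 (proj2 (HX a Ea)) b b' H1 H2 E).
  - exact (proj1 (proj2 (HY a Ea)) b b' H1 H2 E).
Qed.

Lemma in_const : forall u u' w, adj u w -> adj u' w -> c u w = c u' w.
Proof. destruct HL as [_ [_ H]]. intros; eapply H; eauto. Qed.

Lemma tau_inj : forall a b, tau a = tau b -> a = b.
Proof.
  intros [a|a] [b|b] E; simpl in E; try discriminate; injection E; intro E'.
  - f_equal; apply (proj1 HmX _ _ E').
  - f_equal; apply (proj1 HnY _ _ E').
Qed.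

Definition step (a : V) (k : X + Y) : V :=
  epsilon (inhabits a) (fun b => adj a b /\ c a b = k).

Lemma step_spec : forall a k, (exists b, adj a b /\ c a b = k) ->
  adj a (step a k) /\ c a (step a k) = k.
Proof. intros a k H. unfold step. apply (epsilon_spec (inhabits a) (fun b => adj a b /\ c a b = k) H). Qed.

Lemma bool_eq_neg : forall a b c0 d : bool, a = b -> a <> c0 -> b <> d -> c0 = d.
Proof. intros [] [] [] []; congruence. Qed.

Lemma step_lemma : forall u u' w, Rel u u' -> adj u w ->
  adj u' (step u' (tau (c u w))) /\ c u' (step u' (tau (c u w))) = tau (c u w)
  /\ Rel w (step u' (tau (c u w))).
Proof.
  intros u u' w [E R] A.
  assert (Ex : exists b, adj u' b /\ c u' b = tau (c u w)).
  { destruct HL as [HX [HY _]]. destruct (isX u) eqn:Eu.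
    - destruct (proj1 (HX u Eu) w A) as [x Ex]. rewrite Ex. simpl.
      destruct (HX u' (eq_sym E)) as [_ [_ H3]]. apply H3.
    - destruct (proj1 (HY u Eu) w A) as [y Ey]. rewrite Ey. simpl.
      destruct (HY u' (eq_sym E)) as [_ [_ H3]]. apply H3. }
  destruct (step_spec Ex) as [A' C'].
  split; [exact A'|split; [exact C'|]].
  split.
  - apply (bool_eq_neg E); [apply abip; exact A | apply abip; exact A'].
  - intros z z' Hz Hz'. rewrite (in_const Hz' A'), C'. f_equal. apply in_const; auto.
Qed.

Fixpoint rs (l : list V) : V :=
  match l with
  | [] => v'
  | [_] => v'
  | a :: ((b :: _) as s) => step (rs s) (tau (c b a))
  end.

Lemma RS : forall P, NB adj P -> last P v = v -> Rel (hd v P) (rs P).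
Proof.
  induction P as [|a P IH]; intros H L; [inversion H|].
  destruct P as [|b P].
  - simpl in L. subst. exact Hvv.
  - destruct (NB_inv H) as [A [H2 _]].
    change (last (b :: P) v = v) in L.
    specialize (IH H2 L). simpl in IH.
    change (Rel a (step (rs (b :: P)) (tau (c b a)))).
    apply (step_lemma IH (asym A)).
Qed.

Definition path (w : V) : list V :=
  epsilon (inhabits [v]) (fun P => NB adj P /\ hd v P = w /\ last P v = v).

Lemma ext : forall u s z, NB adj (u :: s) -> adj u z ->
  (exists s', s = z :: s') \/ NB adj (z :: u :: s).
Proof.
  intros u s z H A. destruct s as [|p s'].
  - right; constructor; apply asym; exact A.
  - destruct (classic (p = z)) as [E|E].
    + left; exists s'; subst; reflexivity.
    + right; constructor; auto. apply asym; exact A.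
Qed.

Lemma path_exists : forall w, exists P, NB adj P /\ hd v P = w /\ last P v = v.
Proof.
  intro w.
  assert (G : forall a b, clos_refl_trans V adj a b ->
     (exists P, NB adj P /\ hd v P = a /\ last P v = v) ->
     (exists P, NB adj P /\ hd v P = b /\ last P v = v)).
  { intros a b H; induction H as [a b A| a | a b d _ IH1 _ IH2]; auto.
    intros [P [H1 [H2 H3]]]. destruct P as [|u s]; [inversion H1|]. simpl in H2; subst u.
    destruct (ext H1 A) as [[s' E]|H4].
    - subst s. exists (b :: s'). split; [apply (NB_inv H1)|]. split; [reflexivity|].
      exact H3.
    - exists (b :: a :: s). split; auto. }
  apply (G v w (aconn v w)). exists [v]. repeat split; constructor.
Qed.

Lemma path_spec : forall w, NB adj (path w) /\ hd v (path w) = w /\ last (path w) v = v.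
Proof. intro w. unfold path. apply (epsilon_spec (inhabits [v]) _ (path_exists w)). Qed.

Lemma path_eq : forall w P, NB adj P -> hd v P = w -> last P v = v -> path w = P.
Proof.
  intros w P H1 H2 H3. destruct (path_spec w) as [K1 [K2 K3]].
  apply (NB_unique asym atree v K1 H1); congruence.
Qed.

Lemma path_form : forall u, exists s, path u = u :: s.
Proof.
  intro u. destruct (path_spec u) as [K1 [K2 _]].
  destruct (path u) as [|a s]; [inversion K1|]. simpl in K2; subst. eauto.
Qed.

Lemma path_adj : forall u z, adj u z -> path z = z :: path u \/ path u = u :: path z.
Proof.
  intros u z A. destruct (path_form u) as [s E].
  destruct (path_spec u) as [K1 [_ K3]]. rewrite E in K1, K3.
  destruct (ext K1 A) as [[s' E']|H4].
  - right. subst s. rewrite E. f_equal. symmetry. apply path_eq.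
    + apply (NB_inv K1).
    + reflexivity.
    + exact K3.
  - left. rewrite E. apply path_eq; auto.
Qed.

Definition g (w : V) : V := rs (path w).

Lemma g_rel : forall w, Rel w (g w).
Proof.
  intro w. destruct (path_spec w) as [K1 [K2 K3]]. unfold g.
  rewrite <- K2 at 1. apply RS; auto.
Qed.

Lemma g_v : g v = v'.
Proof. unfold g. rewrite (@path_eq v [v]); [reflexivity|constructor|reflexivity|reflexivity]. Qed.

Lemma G1 : forall u z, adj u z -> adj (g u) (g z) /\ c (g u) (g z) = tau (c u z).
Proof.
  intros u z A. destruct (path_form u) as [s Eu].
  destruct (path_adj A) as [E|E].
  - assert (Eg : g z = step (g u) (tau (c u z))).
    { unfold g at 1 2. rewrite E, Eu. reflexivity. }
    rewrite Eg. destruct (step_lemma (g_rel u) A) as [H1 [H2 _]]. split; assumption.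
  - destruct (path_form z) as [t Ez].
    assert (Eg : g u = step (g z) (tau (c z u))).
    { unfold g at 1 2. rewrite E, Ez. reflexivity. }
    destruct (step_lemma (g_rel z) (asym A)) as [H1 _].
    rewrite <- Eg in H1. split; [apply asym; exact H1|].
    destruct (g_rel z) as [_ R]. apply R; auto. apply asym; exact H1.
Qed.

Lemma nbr_lift : forall w b, adj (g w) b -> exists z, adj w z /\ g z = b.
Proof.
  intros w b A. destruct HL as [HX [HY _]]. destruct (g_rel w) as [E _].
  destruct (isX w) eqn:Ew.
  - destruct (proj1 (HX (g w) (eq_sym E)) b A) as [x' Ex'].
    destruct (proj2 HmX x') as [x Ex].
    destruct (proj2 (proj2 (HX w Ew)) x) as [z [Az Cz]].
    exists z; split; auto. destruct (G1 Az) as [A2 C2].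
    apply (col_unique A2 A). rewrite C2, Ex', Cz. simpl. rewrite Ex. reflexivity.
  - destruct (proj1 (HY (g w) (eq_sym E)) b A) as [y' Ey'].
    destruct (proj2 HnY y') as [y Ey].
    destruct (proj2 (proj2 (HY w Ew)) y) as [z [Az Cz]].
    exists z; split; auto. destruct (G1 Az) as [A2 C2].
    apply (col_unique A2 A). rewrite C2, Ey', Cz. simpl. rewrite Ey. reflexivity.
Qed.

Lemma map_NB : forall P, NB adj P -> NB adj (map g P).
Proof.
  intros P H; induction H; simpl.
  - constructor.
  - constructor. apply (G1 H).
  - simpl in IHNB. constructor; auto.
    + apply (G1 H).
    + intro E. destruct (NB_inv H1) as [A2 _].
      destruct (G1 (asym H)) as [_ C1]. destruct (G1 A2) as [_ C2].
      apply H0. apply (col_unique (asym H) A2). apply tau_inj.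
      rewrite <- C1, <- C2, E. reflexivity.
Qed.

Lemma map_inj : forall P Q, NB adj P -> NB adj Q -> last P v = v -> last Q v = v ->
  map g P = map g Q -> P = Q.
Proof.
  induction P as [|a P IH]; intros Q H1 H2 L1 L2 E.
  - destruct Q; [reflexivity|discriminate].
  - destruct Q as [|b Q]; [discriminate|]. simpl in E. injection E; intros E1 E2.
    destruct P as [|a2 P], Q as [|b2 Q]; try discriminate.
    + simpl in L1, L2. congruence.
    + destruct (NB_inv H1) as [A1 [H1' _]]. destruct (NB_inv H2) as [A2 [H2' _]].
      assert (EQ : a2 :: P = b2 :: Q) by (apply IH; auto).
      rewrite EQ. f_equal. injection EQ; intros; subst.
      destruct (G1 (asym A1)) as [_ C1]. destruct (G1 (asym A2)) as [_ C2].
      apply (col_unique (asym A1) (asym A2)). apply tau_inj.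
      rewrite <- C1, <- C2, E2. reflexivity.
Qed.

Lemma g_inj : forall a b, g a = g b -> a = b.
Proof.
  intros a b E.
  destruct (path_spec a) as [Ka1 [Ka2 Ka3]]. destruct (path_spec b) as [Kb1 [Kb2 Kb3]].
  assert (M : map g (path a) = map g (path b)).
  { apply (NB_unique asym atree v' (map_NB Ka1) (map_NB Kb1)).
    - destruct (path_form a) as [s Ea]. destruct (path_form b) as [t Eb].
      rewrite Ea, Eb. simpl. exact E.
    - rewrite <- g_v, !last_map', Ka3, Kb3. reflexivity. }
  assert (P := map_inj Ka1 Kb1 Ka3 Kb3 M). congruence.
Qed.

Lemma g_surj : forall w', exists w, g w = w'.
Proof.
  intro w'.
  assert (G : forall a b, clos_refl_trans V adj a b -> (exists w, g w = a) -> exists w, g w = b).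
  { intros a b H; induction H as [a b A| a | a b d _ IH1 _ IH2]; auto.
    intros [w Ew]. subst. destruct (@nbr_lift w b A) as [z [_ Ez]]. eauto. }
  apply (G v' w' (aconn v' w')). exists v. apply g_v.
Qed.

Theorem construct : exists g0, is_aut adj g0 /\ (forall w, isX (g0 w) = isX w) /\
  (forall u z, adj u z -> c (g0 u) (g0 z) = tau (c u z)) /\ g0 v = v'.
Proof.
  exists g. split; [split|split; [|split]].
  - split; [exact g_inj | exact g_surj].
  - intros u w; split; intro A.
    + apply (G1 A).
    + destruct (@nbr_lift u (g w) A) as [z [Az Ez]]. apply g_inj in Ez. subst; exact Az.
  - intro w. symmetry. apply (g_rel w).
  - intros u z A; apply (G1 A).
  - exact g_v.
Qed.

End Construction.
Unset Implicit Arguments.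
Lemma bij_id : forall X : Type, bijective (fun x : X => x).
Proof. intro X; split; [auto | intro y; exists y; reflexivity]. Qed.

Theorem proposition3p4
  (X Y : Type) (M : (X -> X) -> Prop) (N : (Y -> Y) -> Prop)
  (V : Type) (adj : V -> V -> Prop) (isX : V -> bool) (c : V -> V -> X + Y) :
  at_least_two X -> at_least_two Y ->
  perm_group M -> perm_group N -> nontrivial M -> nontrivial N ->
  biregular_tree adj isX X Y ->
  legal_colouring adj isX c ->
  (forall (v v' : V) (y y' : Y), isX v = true -> isX v' = true ->
     in_colour adj c v (inr y) -> in_colour adj c v' (inr y') ->
     ((exists g, in_U adj isX c M N g /\ g v = v') <->
      (exists n, N n /\ n y = y'))) /\
  (forall (v v' : V) (x x' : X), isX v = false -> isX v' = false ->
     in_colour adj c v (inl x) -> in_colour adj c v' (inl x') ->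
     ((exists g, in_U adj isX c M N g /\ g v = v') <->
      (exists m, M m /\ m x = x'))).
Proof.
  intros [x0 _] [y0 _] HM HN _ _ HT HL.
  assert (Hsym : forall u w, adj u w -> adj w u) by (destruct HT as [[H _] _]; exact H).
  assert (Hbip : forall u w, adj u w -> isX u <> isX w) by (destruct HT as [_ [H _]]; exact H).
  destruct HL as [HX [HY Hin]] eqn:EHL.
  split.
  - intros v v' y y' Ev Ev' Cv Cv'. split.
    + intros [g [[Haut [HisX [_ HYl]]] Eg]].
      destruct (proj2 (proj2 (HX v Ev)) x0) as [u [Au _]].
      assert (Eu : isX u = false).
      { assert (B := Hbip v u Au). rewrite Ev in B. destruct (isX u); congruence. }
      destruct (HYl u Eu) as [n [Nn Hn]].
      exists n; split; auto.
      assert (Hc := Hn v y (Hsym _ _ Au) (Cv u (Hsym _ _ Au))).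
      assert (A2 : adj (g u) (g v)) by exact (proj1 (proj2 Haut u v) (Hsym _ _ Au)).
      rewrite Eg in A2, Hc. rewrite (Cv' _ A2) in Hc. congruence.
    + intros [n [Nn En]].
      assert (R : Rel adj isX c (fun x => x) n v v').
      { split; [congruence|]. intros z z' Az Az'. rewrite (Cv z Az), (Cv' z' Az'). simpl. congruence. }
      destruct (construct HT HL (bij_id X) (pg_bij HN n Nn) R) as [g [Ha [Hi [Hc Hg]]]].
      exists g; split; auto. split; [exact Ha|split; [exact Hi|split]].
      * intros w _. exists (fun x => x). split; [apply (pg_id HM)|].
        intros z x A E. rewrite (Hc w z A), E. reflexivity.
      * intros w _. exists n. split; auto.
        intros z y1 A E. rewrite (Hc w z A), E. reflexivity.
  - intros v v' x x' Ev Ev' Cv Cv'. split.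
    + intros [g [[Haut [HisX [HXl _]]] Eg]].
      destruct (proj2 (proj2 (HY v Ev)) y0) as [u [Au _]].
      assert (Eu : isX u = true).
      { assert (B := Hbip v u Au). rewrite Ev in B. destruct (isX u); congruence. }
      destruct (HXl u Eu) as [m [Mm Hm]].
      exists m; split; auto.
      assert (Hc := Hm v x (Hsym _ _ Au) (Cv u (Hsym _ _ Au))).
      assert (A2 : adj (g u) (g v)) by exact (proj1 (proj2 Haut u v) (Hsym _ _ Au)).
      rewrite Eg in A2, Hc. rewrite (Cv' _ A2) in Hc. congruence.
    + intros [m [Mm Em]].
      assert (R : Rel adj isX c m (fun y => y) v v').
      { split; [congruence|]. intros z z' Az Az'. rewrite (Cv z Az), (Cv' z' Az'). simpl. congruence. }
      destruct (construct HT HL (pg_bij HM m Mm) (bij_id Y) R) as [g [Ha [Hi [Hc Hg]]]].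
      exists g; split; auto. split; [exact Ha|split; [exact Hi|split]].
      * intros w _. exists m. split; auto.
        intros z x1 A E. rewrite (Hc w z A), E. reflexivity.
      * intros w _. exists (fun y => y). split; [apply (pg_id HN)|].
        intros z y1 A E. rewrite (Hc w z A), E. reflexivity.
Qed.
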